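(* Fix $\varepsilon>0$ and any online sequence of service requests. Whenever the algorithm c-REShare$(\varepsilon)$ (defined in the context) handles the arrival of a request $r$, placing all its jobs in a node $i^*$ at layer $\ell^*(r)$ and allocating the VM capabilities $\mu_{b}$ as it prescribes, the resulting deployment of request $r$ is feasible.
   Context: Network: an undirected layered graph whose vertices (nodes) are datacenters. A node is at layer $\ell\ge 0$ if its distance in links from the closest leaf is $\ell$ (leaves are at layer $0$). Every node can host arbitrarily many virtual machines (VMs). Each VM $b$ runs exactly one virtual network function (VNF) $v$ from a finite set $\mathcal V$, has maximum computing capability $\bar\mu>0$ and an allocated capability $\mu_b\le\bar\mu$. Each VNF $v$ has computing complexity $\theta_v\in(0,1]$. Requests: requests $r$ arrive online; each has a set $\mathcal V_r\subseteq\mathcal V$ of VNFs, an arrival time $a_r$, a duration $\tau_r$, a traffic load $\lambda_r\ge\lambda_{\min}$ where $\lambda_{\min}=\inf_r\lambda_r>0$ is known in advance, an end-to-end delay target $D_r$, and an arrival leaf. For $v\in\mathcal V_r$ the pair $(r,v)$ is a job; all jobs of $r$ arrive at $a_r$ and are removed at $a_r+\tau_r$. For a VM $b$ running $v$, $\Lambda(b)$ is the total load $\sum\lambda_{r'}$ of jobs $(r',v)$ assigned to $b$, and every job on $b$ experiences processing latency $1/(\mu_b-\theta_v\Lambda(b))$ (which requires $\mu_b>\theta_v\Lambda(b)$). The forwarding latency from a leaf to a node at layer $\ell$ is $d_\ell$, with $d_{\ell+1}>d_\ell$. The latency of request $r$ is the maximum of $d_\ell$ over the layers $\ell$ hosting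 its jobs plus the sum over its jobs of their processing latencies. Fair delay allocation: $M_{r,v}=1/(\bar\mu-\theta_v\lambda_r)$; $\ell^*(r)$ is the highest layer $\ell$ with $d_\ell+\sum_{v\in\mathcal V_r}M_{r,v}\le D_r$ (assumed to exist); $D_r^v=\frac{M_{r,v}}{\sum_{u\in\mathcal V_r}M_{r,u}}\,(D_r-d_{\ell^*(r)})$. A deployment of $r$ is feasible if each job $(r,v)$ is on a VM $b$ running $v$ with $\mu_b\le\bar\mu$ and $1/(\mu_b-\theta_v\Lambda(b))\le D_r^v$, and the latency of $r$ is at most $D_r$. Latency ranges: for $\varepsilon>0$, $L_0=\big[\frac{1}{\bar\mu-\lambda_{\min}},\frac{1}{\bar\mu-\lambda_{\min}(1+\varepsilon)}\big]$ and $L_j=\big(\frac{1}{\bar\mu-\lambda_{\min}(1+\varepsilon)^j},\frac{1}{\bar\mu-\lambda_{\min}(1+\varepsilon)^{j+1}}\big]$ for $j\ge1$, over the indices $j$ with $\lambda_{\min}(1+\varepsilon)^{j+1}<\bar\mu$. A job $(r,v)$ is associated with $L_j$ if $D_r^v\in L_j$ (every fair delay allocation is presumed to lie in some range). Algorithm c-REShare$(\varepsilon)$: on arrival of $r$, compute $\ell^*(r)$ and choose a node $i^*$ at layer $\ell^*(r)$ (e.g., the least loaded one). For each $v\in\mathcal V_r$, with $j$ such that $D_r^v\in L_j$: a VM $b$ in $i^*$ running $v$ and hosting jobs associated with $L_j$ is viable if $\frac{1}{\bar\mu-\theta_v(\Lambda(b)+\lambda_r)}\le D_r^v$ and $\frac{1}{\bar\mu-\theta_v(\Lambda(b)+\lambda_r)}\le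 D_{r'}^v$ for every job $(r',v)$ already on $b$. If viable VMs exist, place $(r,v)$ on the viable VM with the largest $\Lambda(b)$ and set its capability to $\theta_v\Lambda(b)+1/\min_{(r',v)\in b}D_{r'}^v$ (with $\Lambda(b)$ and the minimum computed including the new job); otherwise open a new VM in $i^*$ running $v$, place $(r,v)$ on it and set its capability to $\theta_v\lambda_r+1/D_r^v$. On departure of $r$, remove each $(r,v)$ from its VM $b$ and reset $\mu_b=\theta_v\Lambda(b)+1/\min_{(r',v)\in b}D_{r'}^v$ over the remaining jobs. *)

(* Defs.v *)
(* Model of the network, the requests and the
   algorithm c-REShare(eps) as a (nondeterministic) transition relation. *)
From Stdlib Require List.
From HB Require Import structures.
From mathcomp Require Import all_boot all_order all_algebra.
Set Implicit Arguments. Unset Strict Implicit. Unset Printing Implicit Defensive.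
Import Order.TTheory GRing.Theory Num.Theory.
Local Open Scope ring_scope.

Section Model.
Variables (R : realFieldType) (V node : finType).

(* A request: VNF set, arrival time, duration, load, delay target, arrival leaf. *)
Record request := Request {
  rV : {set V}; ra : R; rtau : R; rlam : R; rD : R; rleaf : node }.

(* A VM: hosting node, the VNF it runs, allocated capability, and the
   identifiers k of the requests whose job (k, vm_vnf) it hosts. *)
Record vm := VM { vm_node : node; vm_vnf : V; vm_mu : R; vm_jobs : seq nat }.

Definition state := seq vm.

Inductive event := Arr of nat | Dep of nat.

Variables (theta : V -> R) (mubar eps lmin : R) (d : nat -> R)
          (layer : node -> nat) (req : nat -> request).

Definition M (k : nat) (v : V) : R := 1 / (mubar - theta v * rlam (req k)).
Definition Msum (k : nat) : R := \sum_(v in rV (req k)) M k v.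
Definition lstar_ok (k l : nat) : bool := d l + Msum k <= rD (req k).
Definition lstar (k : nat) : nat :=
  (\max_(i : node | lstar_ok k (layer i)) layer i)%N.
Definition Dfair (k : nat) (v : V) : R :=
  M k v / Msum k * (rD (req k) - d (lstar k)).

Definition valid_index (j : nat) : bool := lmin * (1 + eps) ^+ j.+1 < mubar.
Definition in_range (j : nat) (x : R) : bool :=
  valid_index j &&
  (if j == 0%N then
     (1 / (mubar - lmin) <= x) && (x <= 1 / (mubar - lmin * (1 + eps)))
   else
     (1 / (mubar - lmin * (1 + eps) ^+ j) < x) &&
     (x <= 1 / (mubar - lmin * (1 + eps) ^+ j.+1))).

Definition Lambda (b : vm) : R := \sum_(k <- vm_jobs b) rlam (req k).
Definition minD (js : seq nat) (v : V) : R :=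
  match js with
  | [::] => 0
  | k :: ks => foldr (fun k' m => Num.min (Dfair k' v) m) (Dfair k v) ks
  end.
Definition alloc (b : vm) : R :=
  theta (vm_vnf b) * Lambda b + 1 / minD (vm_jobs b) (vm_vnf b).

Definition viable (i : node) (k : nat) (v : V) (b : vm) : Prop :=
  let den := mubar - theta v * (Lambda b + rlam (req k)) in
  [/\ vm_node b = i, vm_vnf b = v,
      (exists j, in_range j (Dfair k v) /\
                 forall k', k' \in vm_jobs b -> in_range j (Dfair k' v)),
      0 < den &
      (1 / den <= Dfair k v /\
       forall k', k' \in vm_jobs b -> 1 / den <= Dfair k' v)].

Definition add_job (b : vm) (k : nat) : vm :=
  let js := k :: vm_jobs b in
  VM (vm_node b) (vm_vnf b) (alloc (VM (vm_node b) (vm_vnf b) 0 js)) js.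

Definition place (s : state) (k : nat) (v : V) (i : node) (s' : state) : Prop :=
  (exists s1 b s2, s = s1 ++ b :: s2 /\ viable i k v b /\
     (forall b', List.In b' s -> viable i k v b' -> Lambda b' <= Lambda b) /\
     s' = s1 ++ add_job b k :: s2)
  \/
  ((forall b, List.In b s -> ~ viable i k v b) /\
   s' = rcons s (VM i v (theta v * rlam (req k) + 1 / Dfair k v) [:: k])).

Fixpoint place_all (s : state) (k : nat) (i : node) (vs : seq V) (s' : state)
  : Prop :=
  match vs with
  | [::] => s' = s
  | v :: vs' => exists s1, place s k v i s1 /\ place_all s1 k i vs' s'
  end.

Definition arrive (s : state) (k : nat) (s' : state) : Prop :=
  exists (i : node) (vs : seq V),
    layer i = lstar k /\ perm_eq vs (enum (rV (req k))) /\ place_all s k i vs s'.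

Definition remove_job (k : nat) (b : vm) : vm :=
  let js := [seq k' <- vm_jobs b | k' != k] in
  VM (vm_node b) (vm_vnf b)
     (if k \in vm_jobs b then alloc (VM (vm_node b) (vm_vnf b) 0 js) else vm_mu b)
     js.
Definition depart (s : state) (k : nat) : state :=
  [seq b <- map (remove_job k) s | ~~ nilp (vm_jobs b)].

Definition step (s : state) (e : event) (s' : state) : Prop :=
  match e with
  | Arr k => arrive s k s'
  | Dep k => s' = depart s k
  end.

Fixpoint run (s : state) (es : seq event) (s' : state) : Prop :=
  match es with
  | [::] => s' = s
  | e :: es' => exists s1, step s e s1 /\ run s1 es' s'
  end.

Definition etime (e : event) : R :=
  match e with Arr k => ra (req k) | Dep k => ra (req k) + rtau (req k) end.
Definition is_arr (k : nat) (e : event) : bool :=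
  if e is Arr k' then k' == k else false.
Definition is_dep (k : nat) (e : event) : bool :=
  if e is Dep k' then k' == k else false.
Definition valid_schedule (es : seq event) : Prop :=
  sorted (fun e1 e2 => etime e1 <= etime e2) es /\
  (forall k, (count (is_arr k) es <= 1)%N /\ (count (is_dep k) es <= 1)%N) /\
  (forall k es1 es2, es = es1 ++ Dep k :: es2 -> has (is_arr k) es1).

Definition proc_lat (b : vm) : R := 1 / (vm_mu b - theta (vm_vnf b) * Lambda b).
Definition latency (s : state) (k : nat) : R :=
  \big[Num.max/0]_(b <- s | k \in vm_jobs b) d (layer (vm_node b)) +
  \sum_(b <- s | k \in vm_jobs b) proc_lat b.
Definition feasible (s : state) (k : nat) : Prop :=
  (forall v, v \in rV (req k) ->
     exists b, List.In b s /\ k \in vm_jobs b /\ vm_vnf b = v) /\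
  (forall b, List.In b s -> k \in vm_jobs b ->
     [/\ vm_vnf b \in rV (req k), vm_mu b <= mubar,
         0 < vm_mu b - theta (vm_vnf b) * Lambda b &
         proc_lat b <= Dfair k (vm_vnf b)]) /\
  latency s k <= rD (req k).

End Model.

(* Main.v *)
Require Import Defs.
From HB Require Import structures.
From mathcomp Require Import all_boot all_order all_algebra.
From mathcomp Require Import lra zify.
Import Order.TTheory GRing.Theory Num.Theory.
Local Open Scope ring_scope.


Lemma In_filter (T : Type) (p : pred T) (t : seq T) b :
  List.In b [seq x <- t | p x] <-> List.In b t /\ p b.
Proof.
elim: t => [|x t IH] /=; first by split=> [[]|[]].
case px: (p x) => /=; rewrite IH; split.
- by case=> [<-|[]]; auto.
- by case=> [[<-|]]; auto.
- by case=> H pb; split; [right|].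
- by case=> [[<-|H] pb]; [rewrite pb in px|].
Qed.

Lemma In_map_mem (T : Type) (U : eqType) (f : T -> U) (t : seq T) b :
  List.In b t -> f b \in map f t.
Proof.
elim: t => [|x t IH] //= [<-|H]; rewrite in_cons ?eqxx //.
by rewrite IH ?orbT.
Qed.

Lemma mem_map_In (T : Type) (U : eqType) (f : T -> U) (t : seq T) v :
  v \in map f t -> exists b, List.In b t /\ f b = v.
Proof.
elim: t => [|x t IH] //=; rewrite in_cons => /orP[/eqP ->|/IH[b [H1 H2]]].
  by exists x; split; [left|].
by exists b; split; [right|].
Qed.

Lemma In_cat (T : Type) (a : T) s1 s2 :
  List.In a (s1 ++ s2) <-> List.In a s1 \/ List.In a s2.
Proof. exact: List.in_app_iff. Qed.

Lemma In_rcons (T : Type) (a x : T) s :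
  List.In a (rcons s x) <-> List.In a s \/ a = x.
Proof.
rewrite -cats1 In_cat /=; split; first by case=> [|[|[]]]; auto.
by case; auto.
Qed.

Lemma sum_le_In (R : realFieldType) (T : Type) (t : seq T) (F G : T -> R) :
  (forall b, List.In b t -> F b <= G b) ->
  \sum_(b <- t) F b <= \sum_(b <- t) G b.
Proof.
elim: t => [|x t IH] H; first by rewrite !big_nil.
rewrite !big_cons lerD ?H ?IH //=; first by left.
by move=> b Hb; apply: H; right.
Qed.

Lemma max_le_In (R : realFieldType) (T : Type) (t : seq T) (F : T -> R) c :
  0 <= c -> (forall b, List.In b t -> F b <= c) ->
  \big[Num.max/0]_(b <- t) F b <= c.
Proof.
move=> c0; elim: t => [|x t IH] H; first by rewrite big_nil.
rewrite big_cons ge_max H ?IH //=; first by move=> b Hb; apply: H; right.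
by left.
Qed.

Lemma foldr_min_ge (R : realFieldType) (f : nat -> R) (a c : R) (l : seq nat) :
  c <= a -> (forall k, k \in l -> c <= f k) ->
  c <= foldr (fun k' m => Num.min (f k') m) a l.
Proof.
move=> ca; elim: l => [|x l IH] H //=.
rewrite le_min H ?mem_head //=; apply: IH => k' Hk'; apply: H; by rewrite in_cons Hk' orbT.
Qed.

Lemma foldr_min_le (R : realFieldType) (f : nat -> R) (a : R) (l : seq nat) :
  foldr (fun k' m => Num.min (f k') m) a l <= a.
Proof. by elim: l => [|x l IH] //=; rewrite ge_min IH orbT. Qed.

Lemma filter_nil_In (T : Type) (p : pred T) (t : seq T) :
  (forall b, List.In b t -> ~~ p b) -> [seq x <- t | p x] = [::].
Proof.
elim: t => [|x t IH] H //=.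
rewrite (negbTE (H x _)) /=; last by left.
by apply: IH => b Hb; apply: H; right.
Qed.

Lemma perm_move (T : eqType) (X a b : seq T) (v : T) :
  perm_eq X (a ++ v :: b) -> perm_eq X (v :: a ++ b).
Proof. move=> H; exact: perm_trans H (permEl (perm_catCA a [:: v] b)). Qed.

Lemma le_sub_add (R : realFieldType) (a b c : R) : b <= c - a -> a + b <= c.
Proof. move=> H; lra. Qed.

Lemma count_cons' (T : Type) (a : pred T) x s : count a (x :: s) = (a x + count a s)%N.
Proof. by []. Qed.

Theorem lemma1 (R : realFieldType) (V node : finType) (theta : V -> R)
  (mubar eps lmin : R) (d : nat -> R) (layer : node -> nat)
  (req : nat -> request R V node)
  (Heps : 0 < eps) (Hmubar : 0 < mubar) (Hlmin : 0 < lmin)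
  (Htheta : forall v, 0 < theta v <= 1)
  (Hd_incr : forall l, d l < d l.+1) (Hd0 : 0 <= d 0%N)
  (Hleaf : forall k, layer (rleaf (req k)) = 0%N)
  (Hlam : forall k, lmin <= rlam (req k))
  (HM : forall k v, v \in rV (req k) -> theta v * rlam (req k) < mubar)
  (Hlstar : forall k, exists i : node,
      lstar_ok theta mubar d req k (layer i))
  (Hrange : forall k v, v \in rV (req k) ->
      exists j, in_range mubar eps lmin j (Dfair theta mubar d layer req k v))
  (sched : seq event) (Hsched : valid_schedule req sched)
  (es1 es2 : seq event) (k : nat) (s s' : state R V node) :
  sched = es1 ++ Arr k :: es2 ->
  run theta mubar eps lmin d layer req [::] es1 s ->
  arrive theta mubar eps lmin d layer req s k s' ->
  feasible theta mubar d layer req s' k.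
Proof.
move=> Hs Hrun [i [vs [Hi [Hperm Hpa]]]].
set DF := Dfair theta mubar d layer req.
have dge0 : forall n, 0 <= d n.
  elim=> // n IH; apply: (le_trans IH); exact: ltW.
have Hok : lstar_ok theta mubar d req k (lstar theta mubar d layer req k).
  rewrite /lstar; case: (Hlstar k) => i0 Hi0.
  rewrite (bigop.bigmax_eq_arg i0) //; by case: arg_maxnP.
set Ms := Msum theta mubar req k.
set dl := d (lstar theta mubar d layer req k).
have HokD : dl + Ms <= rD (req k) by exact: Hok.
have Mpos : forall v, v \in rV (req k) -> 0 < M theta mubar req k v.
  move=> v Hv; rewrite /M div1r invr_gt0 subr_gt0; exact: HM.
have Ms_ge : forall v, v \in rV (req k) -> M theta mubar req k v <= Ms.
  move=> v Hv; rewrite /Ms /Msum (bigD1 v) //= lerDl.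
  by apply: sumr_ge0 => u /andP[Hu _]; apply/ltW/Mpos.
have Ms0 : 0 <= Ms by apply: sumr_ge0 => u Hu; apply/ltW/Mpos.
have DF_ge : forall v, v \in rV (req k) -> M theta mubar req k v <= DF k v.
  move=> v Hv; rewrite /DF /Dfair -/Ms -/dl.
  have Msp : 0 < Ms by apply: lt_le_trans (Mpos v Hv) (Ms_ge v Hv).
  apply: (@le_trans _ _ (M theta mubar req k v / Ms * Ms)).
    by rewrite divfK // gt_eqF.
  rewrite ler_wpM2l //; last by lra.
  by rewrite divr_ge0 // ltW // Mpos.
have noA : ~~ has (is_arr k) es1.
  move: Hsched; rewrite /valid_schedule => -[_ [Hc _]].
  case: (Hc k) => H1 _.
  move: H1; rewrite Hs count_cat /= eqxx has_count.
  lia.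
have place_nok : forall t k' v i' t1, k' != k ->
    (forall b, List.In b t -> k \notin vm_jobs b) ->
    place theta mubar eps lmin d layer req t k' v i' t1 ->
    forall b, List.In b t1 -> k \notin vm_jobs b.
  move=> t k' v i' t1 Hk' Ht [[t1a [b0 [t2 [Et [_ [_ ->]]]]]] | [_ ->]] b.
  - subst t; rewrite !In_cat /= => -[H|[<-|H]].
    + by apply: Ht; rewrite In_cat /=; auto.
    + rewrite /add_job /= in_cons negb_or eq_sym Hk' /=.
      by apply: Ht; rewrite In_cat /=; auto.
    + by apply: Ht; rewrite In_cat /=; auto.
  - rewrite In_rcons => -[H|->]; first exact: Ht.
    by rewrite /= mem_seq1 eq_sym.
have pall_nok : forall vs0 t k' i' t1, k' != k ->
    (forall b, List.In b t -> k \notin vm_jobs b) ->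
    place_all theta mubar eps lmin d layer req t k' i' vs0 t1 ->
    forall b, List.In b t1 -> k \notin vm_jobs b.
  elim=> [|v vs0 IH] t k' i' t1 Hk' Ht /=; first by move=> ->.
  case=> t2 [H1 H2]; apply: (IH t2 k' i') => //.
  exact: (place_nok t k' v i' t2).
have run_nok : forall es t t1, ~~ has (is_arr k) es ->
    (forall b, List.In b t -> k \notin vm_jobs b) ->
    run theta mubar eps lmin d layer req t es t1 ->
    forall b, List.In b t1 -> k \notin vm_jobs b.
  elim=> [|e es IH] t t1 /=; first by move=> _ Ht ->.
  rewrite negb_or => /andP[He Hes] Ht [t2 [Hst Hr]].
  apply: (IH t2) => //; case: e He Hst => [k'|k'] /= He.
  - move=> [i' [vs' [_ [_ Hp]]]]; exact: (pall_nok vs' t k' i').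
  - move=> -> b; rewrite /depart In_filter => -[Hb _].
    case/List.in_map_iff: Hb => b0 [<- Hb0].
    rewrite /remove_job /= mem_filter negb_and; apply/orP; right.
    exact: Ht.
have Hnok : forall b, List.In b s -> k \notin vm_jobs b.
  by apply: (run_nok es1 [::]).
pose good := fun b : vm R V node =>
  [/\ vm_node b = i, vm_vnf b \in rV (req k), vm_mu b <= mubar,
      0 < vm_mu b - theta (vm_vnf b) * Lambda req b &
      proc_lat theta req b <= DF k (vm_vnf b)].
pose Inv := fun (t : state R V node) (done : seq V) =>
  perm_eq (map (@vm_vnf R V node) [seq b <- t | k \in vm_jobs b]) done /\
  (forall b, List.In b t -> k \in vm_jobs b -> good b).
have good_add : forall b0 v, v \in rV (req k) ->
    viable theta mubar eps lmin d layer req i k v b0 ->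
    good (add_job theta mubar d layer req b0 k).
  move=> b0 v Hv [Hn Hvn _ Hden [H1 H2]].
  set den := mubar - _ in Hden H1 H2.
  set m := minD theta mubar d layer req (k :: vm_jobs b0) v.
  have mge : 1 / den <= m.
    rewrite /m /minD; apply: foldr_min_ge => // k' Hk'; exact: H2.
  have mle : m <= DF k v by rewrite /m /minD; apply: foldr_min_le.
  have den0 : 0 < 1 / den by rewrite div1r invr_gt0.
  have m0 : 0 < m by apply: lt_le_trans mge.
  have HL : Lambda req (add_job theta mubar d layer req b0 k) =
            rlam (req k) + Lambda req b0 by rewrite /Lambda /= big_cons.
  have Hmu : vm_mu (add_job theta mubar d layer req b0 k) =
     theta v * (rlam (req k) + Lambda req b0) + 1 / m.
    by rewrite /add_job /alloc /Lambda /= Hvn big_cons.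
  have Hdiff : vm_mu (add_job theta mubar d layer req b0 k) -
     theta (vm_vnf (add_job theta mubar d layer req b0 k)) *
       Lambda req (add_job theta mubar d layer req b0 k) = 1 / m.
    by rewrite Hmu HL /= Hvn; lra.
  have m1 : 1 / m <= den.
    rewrite ler_pdivrMr //; move: mge; rewrite ler_pdivrMr //.
    by rewrite mulrC.
  have Hvadd : vm_vnf (add_job theta mubar d layer req b0 k) = v.
    by rewrite /= Hvn.
  rewrite /good; split.
  - by rewrite /= Hn.
  - by rewrite Hvadd.
  - rewrite Hmu; move: m1; rewrite /den (addrC (Lambda req b0)) => H.
    exact: le_sub_add.
  - rewrite Hdiff div1r invr_gt0; exact: m0.
  - rewrite /proc_lat Hdiff.
    have -> : 1 / (1 / m) = m by rewrite !div1r invrK.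
    by rewrite Hvadd.
have good_new : forall v, v \in rV (req k) ->
    good (VM i v (theta v * rlam (req k) + 1 / DF k v) [:: k]).
  move=> v Hv.
  have M0 := Mpos v Hv; have MD := DF_ge v Hv.
  have D0 : 0 < DF k v by apply: lt_le_trans MD.
  have c0 : 0 < mubar - theta v * rlam (req k) by rewrite subr_gt0; apply: HM.
  have HL : Lambda req (VM i v (theta v * rlam (req k) + 1 / DF k v) [:: k])
            = rlam (req k) by rewrite /Lambda /= big_cons big_nil addr0.
  have Hdiff : theta v * rlam (req k) + 1 / DF k v - theta v * rlam (req k)
               = 1 / DF k v by lra.
  rewrite /good /proc_lat /= HL Hdiff; split => //.
  - apply: le_sub_add; rewrite ler_pdivrMr //.
    by move: MD; rewrite /M ler_pdivrMr // mulrC.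
  - by rewrite div1r invr_gt0.
  - by rewrite !div1r invrK.
have stepI : forall t v t1 done, v \notin done -> v \in rV (req k) ->
    Inv t done -> place theta mubar eps lmin d layer req t k v i t1 ->
    Inv t1 (v :: done).
  move=> t v t1 done Hvd Hv [Hp Hg] [[t1a [b0 [t2 [Et [Hvb [_ ->]]]]]] | [_ ->]].
  - subst t.
    have Hvb' := Hvb; case: Hvb' => _ Hvn _ _ _.
    have kb0 : k \notin vm_jobs b0.
      apply/negP => Hk; move/negP: Hvd; apply.
      rewrite -(perm_mem Hp) -Hvn; apply: In_map_mem; apply/In_filter.
      by split => //; rewrite In_cat /=; auto.
    split.
    + move: Hp; rewrite !filter_cat /= (negbTE kb0) in_cons eqxx /= !map_cat /=.
      have Hva : vm_vnf (add_job theta mubar d layer req b0 k) = v.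
        by rewrite /= Hvn.
      rewrite Hva.
      move=> Hp; apply/permP => q; move/permP: Hp => /(_ q) Hq.
      by rewrite count_cons' -Hq !count_cat count_cons' addnCA.
    + move=> b; rewrite In_cat /= => -[H|[<-|H]] Hk.
      * by apply: Hg => //; rewrite In_cat; auto.
      * exact: (good_add b0 v).
      * by apply: Hg => //; rewrite In_cat /=; auto.
  - split.
    + rewrite filter_rcons /= mem_seq1 eqxx map_rcons.
      by rewrite perm_rcons /= perm_cons.
    + move=> b; rewrite In_rcons => -[H|->] Hk; first exact: Hg.
      exact: good_new.
have pallI : forall vs0 t done t1, uniq (vs0 ++ done) ->
    {subset vs0 <= rV (req k)} -> Inv t done ->
    place_all theta mubar eps lmin d layer req t k i vs0 t1 ->
    Inv t1 (vs0 ++ done).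
  elim=> [|v vs0 IH] t done t1 Hu Hsub HI.
    by move=> Ht; rewrite Ht; exact: HI.
  case=> t2 [H1 H2].
  move: Hu; rewrite cat_cons /= => /andP[Hv Hu].
  have HI2 : Inv t2 (v :: done).
    apply: (stepI t v t2 done) => //.
    + by move: Hv; rewrite mem_cat negb_or => /andP[].
    + by apply: Hsub; rewrite mem_head.
  have Hu2 : uniq (vs0 ++ v :: done).
    rewrite (perm_uniq (permEl (perm_catCA vs0 [:: v] done))) /=.
    by rewrite Hv Hu.
  have [Hp Hg] := IH t2 (v :: done) t1 Hu2
     (fun x Hx => Hsub x (@mem_behead _ (v :: vs0) x Hx)) HI2 H2.
  by split => //; apply: perm_move.
have HI0 : Inv s [::].
  split; last by move=> b Hb Hk; move: (Hnok b Hb); rewrite Hk.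
  by rewrite filter_nil_In.
have Hvs : {subset vs <= rV (req k)}.
  by move=> x; rewrite (perm_mem Hperm) mem_enum.
have Hu0 : uniq (vs ++ [::]) by rewrite cats0 (perm_uniq Hperm) enum_uniq.
have [Hp Hg] := pallI vs s [::] s' Hu0 Hvs HI0 Hpa.
rewrite cats0 in Hp.
split; [|split].
- move=> v Hv.
  have : v \in vs by rewrite (perm_mem Hperm) mem_enum.
  rewrite -(perm_mem Hp) => /mem_map_In [b [Hb <-]].
  by case/In_filter: Hb => Hb Hk; exists b.
- move=> b Hb Hk; case: (Hg b Hb Hk) => _ H1 H2 H3 H4; split => //.
- idtac.
  have Hmax : \big[Num.max/0]_(b <- [seq b <- s' | k \in vm_jobs b])
      d (layer (vm_node b)) <= dl.
    apply: max_le_In; first exact: dge0.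
    move=> b /In_filter [Hb Hk]; case: (Hg b Hb Hk) => -> _ _ _ _.
    by rewrite Hi.
  have Hsum : \sum_(b <- [seq b <- s' | k \in vm_jobs b])
      proc_lat theta req b <= rD (req k) - dl.
    apply: le_trans (@sum_le_In _ _ _ _ (fun b => DF k (vm_vnf b)) _) _.
      by move=> b /In_filter [Hb Hk]; case: (Hg b Hb Hk).
    rewrite -(big_map (@vm_vnf R V node) xpredT (DF k)).
    rewrite (perm_big _ Hp) (perm_big _ Hperm) big_enum /=.
    rewrite /DF /Dfair -/Ms -/dl -mulr_suml -mulr_suml -/(Msum theta mubar req k) -/Ms.
    have [->|Msn0] := eqVneq Ms 0.
      rewrite mul0r mul0r; lra.
    by rewrite divff // mul1r.
  rewrite big_filter in Hmax; rewrite big_filter in Hsum.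
  apply: le_trans (lerD Hmax Hsum) _; lra.
Qed.
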